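(* Let $n>4$ be an integer. The tournament $U_n$ has exactly two sparse orderings. Specifically, if $n$ is even, these are $\Pi(U_n)=\langle v_1,P(2),P(4),\dots,P(n-2),v_n\rangle$ and $\Pi_{1,n}(U_n)=\langle P(1),P(3),\dots,P(n-1)\rangle$; if $n$ is odd, these are $\Pi_1(U_n)=\langle P(1),P(3),\dots,P(n-2),v_n\rangle$ and $\Pi_n(U_n)=\langle v_1,P(2),P(4),\dots,P(n-3),P(n-1)\rangle$, where for $k\in[n-1]$, $P(k)$ denotes the two consecutive vertices $\langle v_{k+1},v_k\rangle$ (written in this order) and concatenation of such blocks gives the ordering.
   Context: For $n\ge1$, $U_n$ is the tournament with vertex set $\{v_1,\dots,v_n\}$ and arc set $\{(v_{i+1},v_i): i\in[n-1]\}\cup\{(v_i,v_j): 1\le i<n,\ i+1<j\le n\}$. For an ordering $\sigma$ of the vertices, an arc $(x,y)$ is backward if $y$ comes before $x$ in $\sigma$. An ordering is sparse if every vertex is incident to at most one backward arc. *)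

(* Defs.v *)
From mathcomp Require Import all_boot.
Set Implicit Arguments. Unset Strict Implicit. Unset Printing Implicit Defensive.

(* Vertices of U_n are the naturals 1..n, vertex v_i being i. *)

Definition U_arc (n : nat) (x y : nat) : bool :=
  [&& 1 <= x <= n, 1 <= y <= n & (x == y.+1) || (x.+1 < y)].

Definition is_ordering (n : nat) (s : seq nat) : bool := perm_eq s (iota 1 n).

Definition backward (n : nat) (s : seq nat) (x y : nat) : bool :=
  U_arc n x y && (index y s < index x s).

Definition sparse (n : nat) (s : seq nat) : Prop :=
  forall v, v \in s -> count (fun u => backward n s v u || backward n s u v) s <= 1.

Definition P (k : nat) : seq nat := [:: k.+1; k].
Definition blocks (ks : seq nat) : seq nat := flatten (map P ks).

(* Pi(U_n) = <v_1, P(2), P(4), ..., P(n-2), v_n> *)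
Definition Pi_even (n : nat) : seq nat :=
  1 :: blocks [seq 2 * i | i <- iota 1 (n./2).-1] ++ [:: n].
(* Pi_{1,n}(U_n) = <P(1), P(3), ..., P(n-1)> *)
Definition Pi1n_even (n : nat) : seq nat :=
  blocks [seq 2 * i + 1 | i <- iota 0 n./2].

(* Pi_1(U_n) = <P(1), P(3), ..., P(n-2), v_n> *)
Definition Pi1_odd (n : nat) : seq nat :=
  blocks [seq 2 * i + 1 | i <- iota 0 n./2] ++ [:: n].
(* Pi_n(U_n) = <v_1, P(2), P(4), ..., P(n-1)> *)
Definition Pin_odd (n : nat) : seq nat :=
  1 :: blocks [seq 2 * i | i <- iota 1 n./2].

(* Main.v *)
Require Import Defs.
From mathcomp Require Import all_boot zify.
Set Implicit Arguments. Unset Strict Implicit. Unset Printing Implicit Defensive.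

Definition inc n s v u := backward n s v u || backward n s u v.
Definition cnt n s v := count (inc n s v) s.

Lemma sparseP n s : sparse n s <-> all (fun v => cnt n s v <= 1) s.
Proof. split => [H|/allP H]; [apply/allP => v; exact: H | exact: H]. Qed.

Lemma count2 (T : eqType) (p : pred T) s u1 u2 :
  u1 != u2 -> u1 \in s -> u2 \in s -> p u1 -> p u2 -> 1 < count p s.
Proof.
move=> ne m1 m2 p1 p2; rewrite -size_filter.
have: size [:: u1; u2] <= size (filter p s).
  apply: uniq_leq_size; first by rewrite /= inE ne.
  by move=> x; rewrite !inE => /orP[] /eqP ->; rewrite mem_filter ?p1 ?p2.
by [].
Qed.

Lemma count1 (T : eqType) (p : pred T) s a :
  uniq s -> (forall u, u \in s -> p u -> u = a) -> count p s <= 1.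
Proof.
move=> us H; rewrite -size_filter.
have: size (filter p s) <= size [:: a].
  apply: uniq_leq_size; first by rewrite filter_uniq.
  by move=> x; rewrite mem_filter => /andP[px xs]; rewrite inE (H x xs px).
by [].
Qed.

Lemma not_sparse n s v u1 u2 : v \in s -> u1 \in s -> u2 \in s -> u1 != u2 ->
  inc n s v u1 -> inc n s v u2 -> ~ sparse n s.
Proof.
move=> vs m1 m2 ne i1 i2 /(_ v vs); rewrite leqNgt.
by rewrite (count2 ne m1 m2 i1 i2).
Qed.

Lemma ord_mem n s x : is_ordering n s -> (x \in s) = (1 <= x < 1 + n).
Proof. by move=> H; rewrite (perm_mem H) mem_iota. Qed.

Lemma ord_uniq n s : is_ordering n s -> uniq s.
Proof. by move=> H; rewrite (perm_uniq H) iota_uniq. Qed.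

Lemma ord_ins m t1 t2 :
  is_ordering m.+1 (t1 ++ m.+1 :: t2) = is_ordering m (t1 ++ t2).
Proof.
rewrite /is_ordering.
have -> : iota 1 m.+1 = rcons (iota 1 m) m.+1 by rewrite -cats1 -[m.+1]addn1 iotaD add1n addn1.
rewrite -[m.+1 :: t2]cat1s perm_catCA cat1s.
by rewrite perm_sym perm_rcons perm_sym perm_cons.
Qed.

Lemma index_ins (t1 t2 : seq nat) (n x y : nat) : x != n -> y != n ->
  (index x (t1 ++ n :: t2) < index y (t1 ++ n :: t2)) =
  (index x (t1 ++ t2) < index y (t1 ++ t2)).
Proof.
move=> xn yn; rewrite !index_cat /= eq_sym (negbTE xn) eq_sym (negbTE yn).
have hx := index_mem x t1; have hy := index_mem y t1.
move: hx hy; case: (x \in t1); case: (y \in t1);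
move: (index x t1) (index y t1) (size t1) (index x t2) (index y t2) => a b c d e ha hb;
apply/idP/idP; lia.
Qed.

Lemma U_arc_lift m x y : x <= m -> y <= m -> U_arc m.+1 x y = U_arc m x y.
Proof.
move=> xm ym; rewrite /U_arc.
have -> : (x <= m.+1) = (x <= m) by lia.
have -> : (y <= m.+1) = (y <= m) by lia.
done.
Qed.

Section Ins.
Variables (m : nat) (t1 t2 : seq nat).
Let s := t1 ++ m.+1 :: t2.
Let t := t1 ++ t2.
Hypothesis Ho : is_ordering m t.

Lemma inc_ins v u : v \in t -> u \in t -> inc m.+1 s v u = inc m t v u.
Proof.
move=> vt ut; have := ord_mem v Ho; have := ord_mem u Ho; rewrite vt ut => hu hv.
rewrite /inc /backward !U_arc_lift; try lia.
rewrite /s !index_ins //; apply/eqP; lia.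
Qed.

Lemma cnt_ins v : v \in t -> cnt m.+1 s v = cnt m t v + inc m.+1 s v m.+1.
Proof.
move=> vt; rewrite /cnt /s count_cat /= /t count_cat.
rewrite (@eq_in_count _ _ (inc m t v) t1); last first.
  by move=> u ut; apply: inc_ins => //; rewrite mem_cat ut.
rewrite (@eq_in_count _ _ (inc m t v) t2); last first.
  by move=> u ut; apply: inc_ins => //; rewrite mem_cat ut orbT.
by rewrite /t addnCA [RHS]addnC.
Qed.

Lemma sparse_restr : sparse m.+1 s -> sparse m t.
Proof.
move=> H v vt.
have vs : v \in s.
  by move: vt; rewrite /s /t !mem_cat inE => /orP[] ->; rewrite ?orbT.
have := H v vs; change (cnt m.+1 s v <= 1 -> cnt m t v <= 1).
rewrite cnt_ins //; move: (cnt m t v) (inc _ _ _ _) => a b; lia.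
Qed.

Lemma sparse_ext : sparse m t -> cnt m.+1 s m.+1 <= 1 ->
  (forall v, v \in t -> inc m.+1 s v m.+1 -> cnt m t v = 0) -> sparse m.+1 s.
Proof.
move=> H Hn Hv v; rewrite /s mem_cat inE orbCA => /orP[/eqP ->|vt]; first exact: Hn.
have vt' : v \in t by rewrite /t mem_cat.
change (cnt m.+1 s v <= 1); rewrite cnt_ins //.
case E: (inc m.+1 s v m.+1); last by rewrite addn0; exact: H.
by rewrite Hv.
Qed.

End Ins.

Definition A n := if odd n then Pi1_odd n else Pi_even n.
Definition B n := if odd n then Pin_odd n else Pi1n_even n.
Definition be k := [seq 2 * i | i <- iota 1 k].
Definition bo k := [seq 2 * i + 1 | i <- iota 0 k].

Lemma blocks_cat a b : blocks (a ++ b) = blocks a ++ blocks b.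
Proof. by rewrite /blocks map_cat flatten_cat. Qed.

Lemma bo_S k : blocks (bo k.+1) = blocks (bo k) ++ [:: (2*k+1).+1; 2*k+1].
Proof. by rewrite /bo -[k.+1]addn1 iotaD map_cat blocks_cat. Qed.

Lemma be_S k : blocks (be k.+1) = blocks (be k) ++ [:: (2*k.+1).+1; 2*k.+1].
Proof. by rewrite /be -[k.+1]addn1 iotaD map_cat blocks_cat /= addn1. Qed.

Lemma parity m : exists k, m = k.*2 \/ m = k.*2.+1.
Proof.
exists m./2; have := odd_double_half m; case: (odd m) => /= e; [right|left]; lia.
Qed.

Lemma A_even k : A k.*2 = 1 :: blocks (be k.-1) ++ [:: k.*2].
Proof. by rewrite /A odd_double /Pi_even half_double. Qed.
Lemma B_even k : B k.*2 = blocks (bo k).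
Proof. by rewrite /B odd_double /Pi1n_even half_double. Qed.
Lemma A_odd k : A k.*2.+1 = blocks (bo k) ++ [:: k.*2.+1].
Proof. by rewrite /A /= odd_double /Pi1_odd /= uphalf_double. Qed.
Lemma B_odd k : B k.*2.+1 = 1 :: blocks (be k).
Proof. by rewrite /B /= odd_double /Pin_odd /= uphalf_double. Qed.

Lemma L1 m : 0 < m -> A m.+1 = B m ++ [:: m.+1].
Proof.
move=> m0; have [k [->|->]] := parity m.
- by rewrite A_odd B_even.
- by rewrite -doubleS A_even B_odd.
Qed.

Lemma L2 m : 3 <= m -> exists Y, A m = Y ++ [:: m - 2; m] /\ B m.+1 = Y ++ [:: m - 2; m.+1; m].
Proof.
move=> m3; have [k [Hk|Hk]] := parity m.
- subst m; have [j ->] : exists j, k = j.+2 by exists k.-2; lia.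
  rewrite A_even B_odd.
  have -> : (j.+2).-1 = j.+1 by [].
  rewrite !be_S.
  exists (1 :: blocks (be j) ++ [:: (2*j.+1).+1]).
  have -> : j.+2.*2 - 2 = 2 * j.+1 by lia.
  rewrite !mul2n /= -!catA /=; split; done.
- subst m; have [j ->] : exists j, k = j.+1 by exists k.-1; lia.
  rewrite A_odd -doubleS B_even !bo_S.
  exists (blocks (bo j) ++ [:: (2*j+1).+1]).
  have -> : j.+1.*2.+1 - 2 = 2 * j + 1 by lia.
  have -> : j.+1.*2.+1 = 2 * j.+1 + 1 by lia.
  rewrite /= -!catA /=; split; first done.
  by have -> : j.+2.*2 = (2 * j.+1 + 1).+1 by lia.
Qed.

Lemma inc_sym n s u v : inc n s u v = inc n s v u.
Proof. by rewrite /inc orbC. Qed.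

Lemma inc_irr n s u : inc n s u u = false.
Proof. by rewrite /inc /backward ltnn !andbF. Qed.

Section Pos.
Variables (m : nat) (t1 t2 : seq nat).
Let s := t1 ++ m.+1 :: t2.
Hypothesis Ho : is_ordering m.+1 s.

Lemma n_notin1 : m.+1 \notin t1.
Proof.
apply/negP => h; move: (ord_uniq Ho); rewrite /s cat_uniq => /and3P[_ /hasPn H _].
by move: (H m.+1 (mem_head _ _)); rewrite h.
Qed.

Lemma idx_n : index m.+1 s = size t1.
Proof. by rewrite /s index_cat (negbTE n_notin1) /= eqxx addn0. Qed.

Lemma idx_1 u : u \in t1 -> index u s < size t1.
Proof. by move=> ut; rewrite /s index_cat ut index_mem. Qed.

Lemma idx_2 u : u \in t2 -> size t1 < index u s.
Proof.
move=> ut; have un : u != m.+1.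
  apply/eqP => e; have := ord_uniq Ho; rewrite /s cat_uniq /= -e ut; lia.
have u1 : u \notin t1.
  apply/negP => h; move: (ord_uniq Ho); rewrite /s cat_uniq => /and3P[_ /hasPn H _].
  by move: (H u); rewrite inE ut orbT h => /(_ isT).
by rewrite /s index_cat (negbTE u1) /= eq_sym (negbTE un); lia.
Qed.

Lemma rng u : u \in s -> 1 <= u <= m.+1.
Proof. by move=> us; move: (ord_mem u Ho); rewrite us; lia. Qed.

Lemma before_n u : u \in t1 -> u != m -> inc m.+1 s m.+1 u = false.
Proof.
move=> ut um; have := rng (u:=u); rewrite /s mem_cat ut => /(_ isT) r.
have := idx_1 ut; rewrite -idx_n => hi.
have un : u != m.+1 by apply/eqP => e; move: n_notin1; rewrite -e ut.
apply/negbTE/negP; rewrite /inc /backward /U_arc.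
move/orP => [/andP[/and3P[_ _ /orP[/eqP e|h]] _] | /andP[_ h]]; try lia.
move: h; rewrite -/s; lia.
Qed.

Lemma after_n u : u \in t2 -> u != m -> inc m.+1 s m.+1 u.
Proof.
move=> ut um; have := rng (u:=u); rewrite /s mem_cat inE ut !orbT => /(_ isT) r.
have := idx_2 ut; rewrite -idx_n => hi.
have un : u != m.+1.
  apply/eqP => e; have := ord_uniq Ho; rewrite /s cat_uniq /= -e ut; lia.
rewrite /inc /backward /U_arc; apply/orP; right; apply/andP; split => //.
apply/and3P; split; try lia.
Qed.

Lemma m_after : m \in t2 -> inc m.+1 s m.+1 m = false.
Proof.
move=> mt; have := idx_2 mt; rewrite -idx_n => hi.
apply/negbTE/negP; rewrite /inc /backward /U_arc.
move/orP => [/andP[_ h] | /andP[/and3P[_ _ /orP[/eqP e|h]] _]]; lia.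
Qed.

End Pos.

Lemma pat1 m X Z v : is_ordering m.+1 (X ++ m.+1 :: Z) -> v \in Z -> v.-1 \in X ->
  2 <= v -> v + 2 <= m.+1 -> ~ sparse m.+1 (X ++ m.+1 :: Z).
Proof.
move=> Ho vZ vX v2 vn.
have i1 : inc m.+1 (X ++ m.+1 :: Z) v m.+1.
  by rewrite inc_sym; apply: after_n => //; apply/eqP => e; lia.
apply: (not_sparse _ _ _ _ i1 (u2 := v.-1)).
- by rewrite mem_cat inE vZ !orbT.
- by rewrite mem_cat inE eqxx orbT.
- by rewrite mem_cat vX.
- apply/eqP; lia.
- have h1 := idx_1 m Z vX; have h2 := idx_2 Ho vZ.
  rewrite /inc /backward; apply/orP; left; apply/andP; split; last lia.
  have := rng Ho (u:=v); rewrite mem_cat inE vZ !orbT => /(_ isT) r.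
  rewrite /U_arc; apply/and3P; split; lia.
Qed.

Lemma pat2 n X Z v : is_ordering n (X ++ v :: Z) -> v.-1 \in X -> v.+1 \in Z ->
  2 <= v -> ~ sparse n (X ++ v :: Z).
Proof.
move=> Ho vX vZ v2.
have U := ord_uniq Ho; have R := fun x => ord_mem x Ho.
have vnX : v \notin X.
  apply/negP => h; move: U; rewrite cat_uniq => /and3P[_ /hasPn H _].
  by move: (H v (mem_head _ _)); rewrite h.
have vnZ : v \notin Z by move: U; rewrite cat_uniq /= => /and3P[_ _ /andP[]].
have ivX : index v.-1 (X ++ v :: Z) < size X by rewrite index_cat vX index_mem.
have ivv : index v (X ++ v :: Z) = size X by rewrite index_cat (negbTE vnX) /= eqxx addn0.
have v1X : v.+1 \notin X.
  apply/negP => h; move: U; rewrite cat_uniq => /and3P[_ /hasPn H _].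
  by move: (H v.+1); rewrite inE vZ orbT h => /(_ isT).
have iv1 : size X < index v.+1 (X ++ v :: Z).
  by rewrite index_cat (negbTE v1X) /= (_ : (v == v.+1) = false) //; [lia | apply/eqP; lia].
have rv1 := R v.+1; rewrite mem_cat inE vZ !orbT in rv1.
apply: (not_sparse (v := v) (u1 := v.-1) (u2 := v.+1)).
- by rewrite mem_cat inE eqxx orbT.
- by rewrite mem_cat vX.
- by rewrite mem_cat inE vZ !orbT.
- apply/eqP; lia.
- rewrite /inc /backward; apply/orP; left; apply/andP; split; last lia.
  rewrite /U_arc; apply/and3P; split; try lia.
- rewrite /inc /backward; apply/orP; right; apply/andP; split; last lia.
  rewrite /U_arc; apply/and3P; split; try lia.
Qed.

Lemma base s : is_ordering 5 s /\ sparse 5 s <-> s = A 5 \/ s = B 5.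
Proof.
have H : all (fun s => all (fun v => cnt 5 s v <= 1) s == ((s == A 5) || (s == B 5)))
  (permutations (iota 1 5)) by vm_compute.
split.
- case=> Ho /sparseP Hs.
  have : s \in permutations (iota 1 5) by rewrite mem_permutations.
  move/(allP H)/eqP; rewrite Hs => /esym /orP[/eqP|/eqP]; auto.
- case=> ->; (split; [by vm_compute | apply/sparseP; by vm_compute]).
Qed.

Lemma L3 m : 4 < m -> exists W, B m = W ++ [:: m; m - 1].
Proof.
case: m => // p p4; have [Y [_ HB]] := L2 (m := p) ltac:(lia).
exists (Y ++ [:: p - 2]); rewrite HB -catA /=; congr (_ ++ [:: _; _; _]); lia.
Qed.

Lemma cat1_inj (t1 Y : seq nat) x a b : t1 ++ [:: x] = Y ++ [:: a; b] -> t1 = Y ++ [:: a] /\ x = b.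
Proof.
move=> e0; have e : t1 ++ [:: x] = (Y ++ [:: a]) ++ [:: b] by rewrite -catA.
have sz : size t1 = size (Y ++ [:: a]) by move: (congr1 size e); rewrite !size_cat /=; lia.
by move/eqP: e; rewrite eqseq_cat // => /andP[/eqP -> /eqP [->]].
Qed.

Lemma cat2_inj (t1 Y : seq nat) x y a b : t1 ++ [:: x; y] = Y ++ [:: a; b] -> t1 = Y /\ x = a /\ y = b.
Proof.
move=> e; have sz : size t1 = size Y by move: (congr1 size e); rewrite !size_cat /=; lia.
by move/eqP: e; rewrite eqseq_cat // => /andP[/eqP -> /eqP [-> ->]].
Qed.

Lemma in_prefix m X Z x : is_ordering m (X ++ Z) -> 1 <= x <= m -> x \notin Z -> x \in X.
Proof.
move=> Ho r xZ; have e := ord_mem x Ho; rewrite mem_cat (negbTE xZ) orbF in e.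
rewrite e; lia.
Qed.

Lemma far m t1 x y z r : is_ordering m.+1 (t1 ++ m.+1 :: x :: y :: z :: r) ->
  ~ sparse m.+1 (t1 ++ m.+1 :: x :: y :: z :: r).
Proof.
move=> Ho; have U := ord_uniq Ho.
have key : forall u1 u2, u1 \in [:: x, y, z & r] -> u2 \in [:: x, y, z & r] ->
    u1 != u2 -> u1 != m -> u2 != m -> ~ sparse m.+1 (t1 ++ m.+1 :: x :: y :: z :: r).
  move=> u1 u2 h1 h2 ne n1 n2.
  apply: (not_sparse (v := m.+1) (u1 := u1) (u2 := u2)) => //.
  - by rewrite mem_cat inE eqxx orbT.
  - by rewrite mem_cat inE h1 !orbT.
  - by rewrite mem_cat inE h2 !orbT.
  - exact: after_n.
  - exact: after_n.
move: U; rewrite cat_uniq => /and3P[_ _ /= /andP[_]].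
rewrite !inE => /and3P[hx hy _].
case: (eqVneq x m) => [xm|xm].
- apply: (key y z); rewrite ?inE ?eqxx ?orbT //; lia.
case: (eqVneq y m) => [ym|ym].
- apply: (key x z); rewrite ?inE ?eqxx ?orbT //; lia.
- apply: (key x y); rewrite ?inE ?eqxx ?orbT //; lia.
Qed.

Lemma no_inc m t1 : is_ordering m.+1 (t1 ++ m.+1 :: [:: m]) ->
  forall u, u \in t1 ++ m.+1 :: [:: m] -> inc m.+1 (t1 ++ m.+1 :: [:: m]) m.+1 u = false.
Proof.
move=> Ho u; rewrite mem_cat !inE => /orP[ut|/orP[/eqP ->|/eqP ->]].
- apply: before_n => //; apply/eqP => e; move: (ord_uniq Ho).
  by rewrite cat_uniq => /and3P[_ /hasPn H _]; move: (H m); rewrite !inE eqxx orbT -e ut => /(_ isT).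
- exact: inc_irr.
- exact: (m_after Ho (mem_head _ _)).
Qed.

Lemma only_m m t1 : is_ordering m.+1 (t1 ++ [:: m.+1]) ->
  forall u, u \in t1 ++ [:: m.+1] -> inc m.+1 (t1 ++ [:: m.+1]) m.+1 u -> u = m.
Proof.
move=> Ho u; rewrite mem_cat !inE => /orP[ut|/eqP ->]; last by rewrite inc_irr.
case: (eqVneq u m) => // um.
by have := @before_n m t1 [::] Ho u ut um => ->.
Qed.

Lemma main n : 4 < n -> forall s, is_ordering n s /\ sparse n s <-> s = A n \/ s = B n.
Proof.
elim: n => // m IH; rewrite ltnS leq_eqVlt => /orP[/eqP <-|m4]; first exact: base.
have IHm := IH m4.
have [Y [HAY HBY]] := L2 (m := m) ltac:(lia).
have [W HW] := L3 m4.
move=> s; split.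
- case=> Ho Hs.
  have ns : m.+1 \in s by rewrite (ord_mem _ Ho); lia.
  case/splitPr: ns Ho Hs => t1 t2 Ho Hs.
  have Ot : is_ordering m (t1 ++ t2) by rewrite -ord_ins.
  have St : sparse m (t1 ++ t2) := sparse_restr Ot Hs.
  have [Ht|Ht] := (IHm (t1 ++ t2)).1 (conj Ot St).
  + rewrite HAY in Ht.
    case: t2 Ht Ho Hs {Ot St} => [|x [|y [|z r]]] Ht Ho Hs.
    * rewrite cats0 in Ht; subst t1; exfalso.
      have e : (Y ++ [:: m - 2; m]) ++ [:: m.+1] = (Y ++ [:: m - 2]) ++ m :: [:: m.+1] by rewrite -!catA.
      rewrite e in Ho Hs; apply: (pat2 Ho _ _ _ Hs); last by lia.
      - apply: in_prefix Ho _ _; first lia. rewrite !inE; lia.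
      - exact: mem_head.
    * case: (cat1_inj Ht) => ? ?; subst; right; rewrite HBY -catA //.
    * case: (cat2_inj Ht) => ? [? ?]; subst; exfalso.
      apply: (pat1 (v := m - 2) Ho _ _ _ _ Hs); try lia.
      - by rewrite !inE eqxx.
      - apply: in_prefix Ho _ _; first lia. rewrite !inE; lia.
    * by exfalso; apply: far Ho Hs.
  + case: t2 Ht Ho Hs {Ot St} => [|x [|y [|z r]]] Ht Ho Hs.
    * rewrite cats0 in Ht; subst t1; left; rewrite L1 //; lia.
    * rewrite HW in Ht; case: (cat1_inj Ht) => ? ?; subst; exfalso.
      apply: (pat1 (v := m - 1) Ho _ _ _ _ Hs); try lia.
      - by rewrite !inE eqxx.
      - apply: in_prefix Ho _ _; first lia. rewrite !inE; lia.
    * rewrite HW in Ht; case: (cat2_inj Ht) => ? [? ?]; subst; exfalso.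
      apply: (pat1 (v := m - 1) Ho _ _ _ _ Hs); try lia.
      - by rewrite !inE eqxx orbT.
      - apply: in_prefix Ho _ _; first lia. rewrite !inE; lia.
    * by exfalso; apply: far Ho Hs.
- case=> ->.
  + rewrite L1; last lia.
    have [Ob Sb] := (IHm (B m)).2 (or_intror erefl).
    have Os : is_ordering m.+1 (B m ++ m.+1 :: [::]) by rewrite ord_ins cats0.
    split => //.
    apply: sparse_ext; rewrite ?cats0 //.
    * apply: (count1 (a := m)); first exact: ord_uniq Os.
      exact: only_m.
    * move=> v vB; rewrite inc_sym => /(only_m Os) -> //; last by rewrite mem_cat vB.
      have [p ep] : exists p, m = p.+1 by exists m.-1; lia.
      have HW' : B m = W ++ p.+1 :: [:: p] by rewrite HW ep; congr (_ ++ [:: _; _]); lia.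
      subst m; rewrite /cnt HW'; rewrite HW' in Ob.
      apply/eqP; rewrite -leqn0 -(count_pred0 (W ++ p.+1 :: [:: p])).
      rewrite leq_eqVlt; apply/orP; left; apply/eqP; apply: eq_in_count => u uW.
      exact: no_inc.
  + rewrite HBY.
    have e : Y ++ [:: m - 2; m.+1; m] = (Y ++ [:: m - 2]) ++ m.+1 :: [:: m] by rewrite -catA.
    have [Oa Sa] := (IHm (A m)).2 (or_introl erefl).
    rewrite HAY in Oa Sa.
    have Os : is_ordering m.+1 ((Y ++ [:: m - 2]) ++ m.+1 :: [:: m]) by rewrite ord_ins -catA.
    rewrite e; split => //.
    have Oa' : is_ordering m ((Y ++ [:: m - 2]) ++ [:: m]) by rewrite -catA.
    have Sa' : sparse m ((Y ++ [:: m - 2]) ++ [:: m]) by rewrite -catA.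
    apply: (sparse_ext Oa' Sa').
    * apply: (count1 (a := 0)); first exact: ord_uniq Os.
      by move=> u us; rewrite (no_inc Os) // catA.
    * move=> v vt; rewrite inc_sym (no_inc Os) //.
      by move: vt; rewrite !mem_cat !inE => /orP[->|->]; rewrite ?orbT.
Qed.

Lemma A_neq_B n : 4 < n -> A n != B n.
Proof.
case: n => // m n4; apply/eqP => e.
have [Y [_ HBY]] := L2 (m := m) ltac:(lia).
have := congr1 (last 0) e; rewrite L1; last lia.
rewrite HBY !last_cat /=; lia.
Qed.

Theorem mainTheorem5 (n : nat) : 4 < n ->
  if ~~ odd n then
    Pi_even n != Pi1n_even n /\
    forall s : seq nat, (is_ordering n s /\ sparse n s) <-> (s = Pi_even n \/ s = Pi1n_even n)
  else
    Pi1_odd n != Pin_odd n /\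
    forall s : seq nat, (is_ordering n s /\ sparse n s) <-> (s = Pi1_odd n \/ s = Pin_odd n).
Proof.
move=> n4; have M := main n4; have AB := A_neq_B n4.
rewrite /A /B in M AB; case: (odd n) M AB => /= M AB; split => //.
Qed.
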